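(* Let $p\in(0,1)$, let $(\mathcal M,d,0)$ be a finite pointed $p$-metric space and $0\in\mathcal N\subset\mathcal M$ such that $\mathrm{amen}_p(\mathcal N,\mathcal M)>\mathrm{amen}_p(\mathcal N,\mathcal M\setminus\{z\})$ for every $z\in\mathcal M\setminus\mathcal N$. Let $a\in\mathbb R^{\mathcal N\setminus\{0\}}$ and $T\in\mathcal T(\mathcal M)$ satisfy \[\mathrm{amen}_p(\mathcal N,\mathcal M)=\frac{\|\sum_{x\in\mathcal N\setminus\{0\}}a_x\delta(x)\|_{\mathcal F_p(\mathcal N)}}{T(a)}.\] If $\mathrm{leaf}(T)\ne\mathcal N\setminus\{0\}$, then there exist $\mathcal M'\subsetneq\mathcal M$ and $\mathcal N'\subset\mathcal M'$ with $|\mathcal N'|<|\mathcal N|$ (both with the restriction of $d$ and a common base point in $\mathcal N'$) such that $\mathrm{amen}_p(\mathcal N,\mathcal M)\le\mathrm{amen}_p(\mathcal N',\mathcal M')$.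
   Context: A $p$-metric space is a set with $d$ such that $d^p$ is a metric; pointed means a distinguished point. A $p$-Banach space is a complete vector space with a $p$-norm. For a pointed $p$-metric space with base point $0$, $\delta(x)$ is evaluation at $x$ on real functions vanishing at $0$, and $\mathcal F_p$ is the completion of $\mathrm{span}\{\delta(x)\}$ under $\|\sum a_i\delta(x_i)\|=\sup\|\sum a_if(x_i)\|_Y$ over $p$-Banach $Y$ and $1$-Lipschitz $f$ into $Y$ vanishing at $0$. For $0\in\mathcal N\subset\mathcal M$, $L_j:\mathcal F_p(\mathcal N)\to\mathcal F_p(\mathcal M)$ is the linear map $\delta_{\mathcal N}(x)\mapsto\delta_{\mathcal M}(x)$, and $\mathrm{amen}_p(\mathcal N,\mathcal M)=\|L_j^{-1}\|$ if $L_j$ is an isomorphism onto its range ($+\infty$ otherwise); this does not depend on the choice of base point in $\mathcal N$. $\mathcal T(\mathcal M)$ is the set of trees on $\mathcal M$ rooted at $0$; for $x\ne0$, $\mathrm{pred}_T(x)$ is the neighbour of $x$ on the path to $0$, $V_x^T$ the vertex set of the subtree rooted at $x$, $\mathrm{leaf}(T)$ the set of vertices $v$ with no $u$ such that $\mathrm{pred}_T(u)=v$. For $a\in\mathbb R^{\mathcal N\setminus\{0\}}$ extended by $0$ to $\mathcal M$, $T(a)=\big(\sum_{x\in\mathcal M\setminus\{0\}}|(\sum_{y\in V_x^T}a_y)d(\mathrm{pred}_T(x),x)|^p\big)^{1/p}$. *)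

(* Defs.v *)
From HB Require Import structures.
From mathcomp Require Import all_boot all_order all_algebra.
From mathcomp Require Import all_classical all_reals.
From mathcomp Require Import ereal exp.
Set Implicit Arguments. Unset Strict Implicit. Unset Printing Implicit Defensive.
Import Order.TTheory GRing.Theory Num.Theory.
Local Open Scope ring_scope.

Record pBanach (R : realType) (p : R) := PBanach {
  pb_car :> lmodType R;
  pb_norm : pb_car -> R;
  pb_norm_ge0 : forall x, 0 <= pb_norm x;
  pb_norm_eq0 : forall x, pb_norm x = 0 -> x = 0;
  pb_normZ : forall (c : R) x, pb_norm (c *: x) = `|c| * pb_norm x;
  pb_norm_ptri : forall x y,
      pb_norm (x + y) `^ p <= pb_norm x `^ p + pb_norm y `^ p;
  pb_complete : forall u : nat -> pb_car,
      (forall e : R, 0 < e -> exists N, forall n m, (N <= n)%N -> (N <= m)%N ->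
          pb_norm (u n - u m) < e) ->
      exists l, forall e : R, 0 < e -> exists N, forall n, (N <= n)%N ->
          pb_norm (u n - l) < e
}.

Definition is_pmetric (R : realType) (p : R) (T : Type) (d : T -> T -> R) :=
  [/\ forall x y, 0 <= d x y,
      forall x y, d x y = 0 <-> x = y,
      forall x y, d x y = d y x &
      forall x y z, d x z `^ p <= d x y `^ p + d y z `^ p].

Section Free.
Variables (R : realType) (p : R) (T : finType) (d : T -> T -> R).

(* Norm in F_p(S) (S with the restriction of d, base point b) of the
   element \sum_{x in S} a x delta(x)  (delta(b) = 0). *)
Definition fpnorm (S : {set T}) (b : T) (a : T -> R) : \bar R :=
  ereal_sup [set r%:E | r in
    [set r : R | exists (Y : pBanach p) (f : T -> Y),
        [/\ f b = 0,
            (forall x y, x \in S -> y \in S ->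
               pb_norm (f x - f y) <= d x y) &
            r = pb_norm (\sum_(x in S) a x *: f x)]]].

(* amen_p(N, M) (base point b in N) = ||L_j^{-1}||: the least constant C
   with ||mu||_{F_p(N)} <= C ||L_j mu||_{F_p(M)} for all mu in span
   {delta(x) : x in N}; +oo if no such constant exists. *)
Definition amen (b : T) (N M : {set T}) : \bar R :=
  ereal_inf [set C%:E | C in
    [set C : R | 0 <= C /\
       forall a : T -> R, (forall x, x \notin N \/ x = b -> a x = 0) ->
         (fpnorm N b a <= C%:E * fpnorm M b a)%E]].

(* Trees on T rooted at o, encoded by the predecessor map pr
   (pr x = pred_T(x) for x <> o, and pr o = o by convention):
   following predecessors from any vertex reaches the root. *)
Definition rooted_tree (o : T) (pr : T -> T) : Prop :=
  pr o = o /\ forall x, exists n, iter n pr x = o.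

Definition subtree (pr : T -> T) (x : T) : {set T} :=
  [set y | [exists n : 'I_#|T|.+1, iter n pr y == x]].

Definition leaves (o : T) (pr : T -> T) : {set T} :=
  [set v | [forall u, (u != o) ==> (pr u != v)]].

Definition tree_val (o : T) (pr : T -> T) (a : T -> R) : R :=
  (\sum_(x | x != o) `| (\sum_(y in subtree pr x) a y) * d (pr x) x | `^ p)
    `^ p^-1.

End Free.

(* Main.v *)
Require Import Defs.
From HB Require Import structures.
From mathcomp Require Import all_boot all_order all_algebra.
From mathcomp Require Import all_classical all_reals.
From mathcomp Require Import ereal exp.
Import Order.TTheory GRing.Theory Num.Theory.
Local Open Scope ring_scope.

Lemma sub_fconnect (T : finType) (pr : T -> T) y z :
  (z \in subtree pr y) = fconnect pr z y.
Proof.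
rewrite inE; apply/existsP/idP => [[n /eqP <-]|H].
  exact: fconnect_iter.
have lt : (findex pr z y < #|T|.+1)%N.
  apply: (leq_trans (findex_max H)); apply: ltnW; rewrite ltnS; exact: max_card.
by exists (Ordinal lt); rewrite /= iter_findex.
Qed.

Lemma iter_fix (T : finType) (pr : T -> T) o n : pr o = o -> iter n pr o = o.
Proof. by move=> h; elim: n => //= n ->. Qed.

Lemma fconnect_root (T : finType) (pr : T -> T) o y :
  pr o = o -> fconnect pr o y -> y = o.
Proof. by move=> h /iter_findex <-; rewrite iter_fix. Qed.

Lemma acyc (T : finType) (pr : T -> T) o y :
  rooted_tree o pr -> y != o -> ~~ fconnect pr (pr y) y.
Proof.
move=> [h1 h2] yo; apply/negP => /iter_findex; set n := findex _ _ _ => e.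
have per : forall m, iter (m * n.+1) pr y = y.
  elim=> // m IH; by rewrite mulSn iterD IH iterSr e.
have [k hk] := h2 y.
have : iter (k * n.+1) pr y = o.
  rewrite -(subnK (leq_pmulr k (ltn0Sn n))) iterD hk iter_fix //.
by rewrite per => eyo; move: yo; rewrite eyo eqxx.
Qed.

Lemma fconnect_comp (T : finType) (pr : T -> T) z x y :
  fconnect pr z y -> fconnect pr z x -> fconnect pr y x || fconnect pr x y.
Proof.
move=> /iter_findex e1 /iter_findex e2.
set i := findex _ _ y in e1; set j := findex _ _ x in e2.
case: (leqP i j) => h.
  by rewrite -e1 -e2 -(subnK h) iterD fconnect_iter.
by rewrite -e1 -e2 -(subnK (ltnW h)) iterD fconnect_iter orbT.
Qed.

Lemma tele (T : finType) (pr : T -> T) (V : zmodType) (F : T -> V) (M : {set T}) b :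
  (forall z, z \in M -> fconnect pr z b) ->
  (forall y, y \in M -> y != b -> pr y \in M) ->
  (forall y, y \in M -> y != b -> ~~ fconnect pr (pr y) y) ->
  forall z, z \in M ->
  \sum_(y in M | (y != b) && fconnect pr z y) (F y - F (pr y)) = F z - F b.
Proof.
move=> H1 H2 H3.
have H4 : forall y, y \in M -> y != b -> ~~ fconnect pr b y.
  move=> y yM yb; apply/negP => by_.
  have := H1 y yM; rewrite fconnect_eqVf (negbTE yb) /= => pyb.
  by move/negP: (H3 y yM yb); apply; exact: connect_trans pyb by_.
have base : \sum_(y in M | (y != b) && fconnect pr b y) (F y - F (pr y)) = F b - F b.
  rewrite subrr big_pred0 // => y; apply/negP => /andP [yM /andP [yb]].
  by apply/negP; exact: H4.
move=> z zM; have := H1 z zM => /iter_findex; move: (findex _ _ _) => n.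
elim: n z zM => [|n IH] z zM; first by move=> /= ->.
case: (eqVneq z b) => [-> _|zb]; first exact: base.
rewrite iterSr => e.
rewrite (bigD1 z) /=; last by rewrite zM zb connect0.
transitivity (F z - F (pr z) + (F (pr z) - F b)); last by rewrite addrA subrK.
congr (_ + _); rewrite -(IH (pr z) (H2 z zM zb) e).
apply: eq_bigl => y; rewrite [fconnect pr z y]fconnect_eqVf.
case: (eqVneq y z) => [->|yz]; last by rewrite andbT.
rewrite andbF; apply/esym/negP => /and3P [_ _ h].
by move/negP: (H3 z zM zb); apply.
Qed.

Lemma tree_sum (R : realType) (T : finType) (pr : T -> T) (V : lmodType R)
  (f : T -> V) (M : {set T}) b (c : T -> R) :
  (forall z, z \in M -> fconnect pr z b) ->
  (forall y, y \in M -> y != b -> pr y \in M) ->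
  (forall y, y \in M -> y != b -> ~~ fconnect pr (pr y) y) ->
  (forall z, z \notin M -> c z = 0) -> f b = 0 ->
  \sum_(z in M) c z *: f z =
  \sum_(y in M | y != b) (\sum_(z in subtree pr y) c z) *: (f y - f (pr y)).
Proof.
move=> H1 H2 H3 Hc fb; symmetry.
under eq_bigr do rewrite scaler_suml big_mkcond /=.
rewrite exchange_big /= [RHS]big_mkcond /=; apply: eq_bigr => z _.
rewrite -big_mkcondr /= -scaler_sumr.
case: (boolP (z \in M)) => zM; last by rewrite Hc // !scale0r.
have := @tele _ _ _ f _ _ H1 H2 H3 _ zM; rewrite fb subr0 => <-.
congr (_ *: _); apply: eq_bigl => y; by rewrite sub_fconnect andbA.
Qed.

Lemma pnorm0 (R : realType) (p : R) (Y : pBanach p) : pb_norm (0 : Y) = 0.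
Proof. by rewrite -(scale0r (0 : Y)) pb_normZ normr0 mul0r. Qed.

Lemma pnormN (R : realType) (p : R) (Y : pBanach p) (x y : Y) :
  pb_norm (x - y) = pb_norm (y - x).
Proof. by rewrite -[x - y]opprB -[- (y - x)]scaleN1r pb_normZ normrN1 mul1r. Qed.

Lemma pnorm_sum (R : realType) (p : R) (Y : pBanach p) (I : finType) (P : pred I)
  (v : I -> Y) : 0 < p ->
  pb_norm (\sum_(i | P i) v i) `^ p <= \sum_(i | P i) pb_norm (v i) `^ p.
Proof.
move=> hp.
apply: (big_rec2 (fun x y => pb_norm x `^ p <= y)).
  by rewrite pnorm0 powR0 // gt_eqF.

move=> i x y _ h; apply: le_trans (pb_norm_ptri _ _) _.
by rewrite lerD2l.
Qed.

Lemma fp_tree_bound (R : realType) (p : R) (T : finType) (d : T -> T -> R)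
  (pr : T -> T) (M : {set T}) b (c : T -> R) :
  0 < p ->
  (forall z, z \in M -> fconnect pr z b) ->
  (forall y, y \in M -> y != b -> pr y \in M) ->
  (forall y, y \in M -> y != b -> ~~ fconnect pr (pr y) y) ->
  (forall z, z \notin M -> c z = 0) ->
  (fpnorm p d M b c <=
   ((\sum_(y in M | y != b) `|(\sum_(z in subtree pr y) c z) * d (pr y) y| `^ p)
      `^ p^-1)%:E)%E.
Proof.
move=> hp H1 H2 H3 Hc.
apply: ge_ereal_sup => _ [rr [Y [f [fb Lip ->]]] <-]; rewrite lee_fin.
rewrite (@tree_sum _ _ _ _ f _ _ c H1 H2 H3 Hc fb).
set r := pb_norm _.
have r0 : 0 <= r by apply: pb_norm_ge0.
rewrite -{1}(powRr1 r0) -(divff (lt0r_neq0 hp)) powRrM.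
apply: ge0_ler_powR.
- by rewrite invr_ge0 ltW.
- by rewrite nnegrE powR_ge0.
- by rewrite nnegrE sumr_ge0 // => i _; rewrite powR_ge0.

rewrite /r; have := (@pnorm_sum _ _ _ _ (fun y => (y \in M) && (y != b)) (fun y => (\sum_(z in subtree pr y) c z) *: (f y - f (pr y))) hp).
move/le_trans; apply.
apply: ler_sum => y /andP [yM yb].
apply: ge0_ler_powR; [exact: ltW|by rewrite nnegrE pb_norm_ge0|by rewrite nnegrE normr_ge0|].
rewrite pb_normZ normrM; apply: ler_wpM2l => //.
rewrite pnormN; apply: le_trans (Lip _ _ (H2 _ yM yb) yM) _.
exact: ler_norm.
Qed.

Lemma ediv_le (R : realType) (F : \bar R) (C t : R) : 0 < t ->
  (F <= (C * t)%:E)%E -> (F / t%:E <= C%:E)%E.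
Proof.
move=> t0; rewrite inver gt_eqF //.
case: F => [r||] //=; last by rewrite gt0_mulNye ?leNye // lte_fin invr_gt0.

by rewrite lee_fin => h; rewrite -EFinM lee_fin ler_pdivrMr.
Qed.

Lemma amen_use (R : realType) (p : R) (T : finType) (d : T -> T -> R) b
  (N' M' : {set T}) (C : R) (c : T -> R) (B : R) (Y : pBanach p) (f : T -> Y) :
  (0 <= C /\ forall a : T -> R, (forall x, x \notin N' \/ x = b -> a x = 0) ->
         (fpnorm p d N' b a <= C%:E * fpnorm p d M' b a)%E) ->
  (forall x, x \notin N' \/ x = b -> c x = 0) ->
  (fpnorm p d M' b c <= B%:E)%E ->
  f b = 0 -> (forall x y, x \in N' -> y \in N' -> pb_norm (f x - f y) <= d x y) ->
  pb_norm (\sum_(x in N') c x *: f x) <= C * B.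
Proof.
move=> [C0 HC] Hc HB fb Lip.
have h1 : ((pb_norm (\sum_(x in N') c x *: f x))%:E <= fpnorm p d N' b c)%E.
  by apply: ereal_sup_ubound; exists (pb_norm (\sum_(x in N') c x *: f x)) => //; exists Y, f.
rewrite -lee_fin; apply: (le_trans h1); apply: (le_trans (HC c Hc)).
by rewrite EFinM; apply: lee_wpmul2l; rewrite ?lee_fin.
Qed.

Lemma sum_sub_le (R : realType) (I : finType) (P Q : pred I) (F : I -> R) :
  (forall i, 0 <= F i) -> \sum_(i | Q i && P i) F i <= \sum_(i | Q i) F i.
Proof.
move=> h; rewrite [X in _ <= X](bigID P) /= lerDl sumr_ge0 //.
Qed.

Lemma sum_ind (R : realType) (V : lmodType R) (I : finType) (x : I) (s : R) (G : I -> V) :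
  \sum_i ((i == x)%:R * s) *: G i = s *: G x.
Proof.
rewrite (bigD1 x) //= eqxx mul1r big1 ?addr0 // => i /negbTE ->.
by rewrite mul0r scale0r.
Qed.

Lemma sum_ind_in (R : realType) (I : finType) (A : {set I}) (x : I) (s : R) :
  \sum_(i in A) ((i == x)%:R * s) = if x \in A then s else 0.
Proof.
case: ifP => xA.
  rewrite (bigD1 x) //= eqxx mul1r big1 ?addr0 // => i /andP [_ /negbTE ->].
  by rewrite mul0r.
by rewrite big1 // => i iA; case: eqP => [e|_]; [by move: iA; rewrite e xA | rewrite mul0r].
Qed.

Lemma sum_supp (R : realType) (V : lmodType R) (I : finType) (A : {set I})
  (c : I -> R) (G : I -> V) :
  (forall z, z \notin A -> c z = 0) ->
  \sum_(z in A) c z *: G z = \sum_z c z *: G z.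
Proof.
move=> h; rewrite big_mkcond; apply: eq_bigr => z _.
by case: ifPn => // zA; rewrite h // scale0r.
Qed.

Lemma grp_id (V : zmodType) (X Y Z : V) : X - Y + Z + (Y - Z) = X.
Proof. by rewrite addrA (addrAC (X - Y) Z Y) subrK addrK. Qed.

Lemma pow_bound (R : realType) (p n C K Q0 : R) : 0 < p -> 0 <= n -> 0 <= C ->
  C <= K -> 0 <= Q0 -> n <= C * Q0 `^ p^-1 -> n `^ p <= K `^ p * Q0.
Proof.
move=> p0 n0 C0 CK Q00 h.
have : n `^ p <= (C * Q0 `^ p^-1) `^ p.
  apply: ge0_ler_powR; [exact: ltW|by rewrite nnegrE|by rewrite nnegrE mulr_ge0 ?powR_ge0|exact: h].
rewrite powRM ?powR_ge0 // -powRrM mulVf ?lt0r_neq0 // powRr1 // => h2.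
apply: le_trans h2 _; apply: ler_wpM2r => //.
apply: ge0_ler_powR; [exact: ltW|by rewrite nnegrE|by rewrite nnegrE (le_trans C0)|exact: CK].
Qed.

Lemma pow_back (R : realType) (p r K Q0 : R) : 0 < p -> 0 <= r -> 0 <= K ->
  0 <= Q0 -> r `^ p <= K `^ p * Q0 -> r <= K * Q0 `^ p^-1.
Proof.
move=> p0 r0 K0 Q00 h.
rewrite -(powRr1 r0) -(divff (lt0r_neq0 p0)) powRrM.
rewrite -(powRr1 K0) -(divff (lt0r_neq0 p0)) powRrM -powRM ?powR_ge0 //.
apply: ge0_ler_powR => //; first by rewrite invr_ge0 ltW.
- by rewrite nnegrE powR_ge0.
- by rewrite nnegrE mulr_ge0 ?powR_ge0.
Qed.

Theorem proposition3p14 (R : realType) (p : R) (T : finType)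
    (d : T -> T -> R) (o : T) (N : {set T}) (a : T -> R) (pr : T -> T) :
  0 < p < 1 ->
  is_pmetric p d ->
  o \in N ->
  (forall z, z \notin N ->
     (amen p d o N [set: T] > amen p d o N ([set: T] :\ z))%E) ->
  (forall x, x \notin N \/ x = o -> a x = 0) ->
  rooted_tree o pr ->
  0 < tree_val p d o pr a ->
  amen p d o N [set: T] = (fpnorm p d N o a / (tree_val p d o pr a)%:E)%E ->
  leaves o pr != N :\ o ->
  exists (M' N' : {set T}) (b : T),
    [/\ M' \proper [set: T], N' \subset M', b \in N',
        (#|N'| < #|N|)%N &
        (amen p d o N [set: T] <= amen p d b N' M')%E].
Proof.
move=> /andP [p0 p1] _ oN Hz Ha rt Tpos HA Hleaf.
have [pro Hroot] := rt.
have H1 : forall z, fconnect pr z o.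
  by move=> z; have [n <-] := Hroot z; exact: fconnect_iter.
set t := tree_val p d o pr a in Tpos HA.
set S := fun y => \sum_(z in subtree pr y) a z.
set Q := \sum_(y | y != o) `|S y * d (pr y) y| `^ p.
have tQ : t = Q `^ p^-1 by [].
have Q0 : 0 <= Q by rewrite sumr_ge0 // => y _; rewrite powR_ge0.
have tp : forall B, 0 <= B -> B <= Q -> B `^ p^-1 <= t.
  move=> B B0 BQ; rewrite tQ; apply: ge0_ler_powR => //; by rewrite ?invr_ge0 ?ltW ?nnegrE.
have [vl|sub] := boolP [exists v, (v \in leaves o pr) && (v \notin N :\ o)].
  have [v /andP [vL vN]] := existsP vl.
  have vL' : forall u, u != o -> pr u != v.
    by move=> u uo; move: vL; rewrite inE => /forallP /(_ u) /implyP; apply.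
  rewrite in_setD1 negb_and negbK in vN.
  case/orP: vN => [/eqP vo|vN].
    have allo : forall z, z = o.
      move=> z; have [n e] := Hroot z; elim: n z e => [|n IH] z; first done.
      rewrite iterSr => e; have pzo := IH _ e.
      apply/eqP; apply: contraT => zo; move: (vL' z zo); by rewrite pzo vo eqxx.
    move: Tpos; rewrite tQ /Q big_pred0 ?powR0 ?ltxx //.
      by rewrite invr_neq0 // lt0r_neq0.
    by move=> y; rewrite (allo y) eqxx.
  have := Hz v vN => /ereal_inf_lt [_ [C HC <-] CA].
  exfalso; move: CA; apply/negP; rewrite -leNgt.
  rewrite HA; apply: ediv_le Tpos _.
  apply: ge_ereal_sup => _ [r [Y [f [fo Lip ->]]] <-]; rewrite lee_fin.
  have Hb := @fp_tree_bound _ p _ d pr ([set: T] :\ v) o a p0 (fun z _ => H1 z).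
  have H2v : forall y, y \in [set: T] :\ v -> y != o -> pr y \in [set: T] :\ v.
    by move=> y _ yo; rewrite !in_setD1 finset.in_setT andbT vL'.
  have Hcv : forall z, z \notin [set: T] :\ v -> a z = 0.
    move=> z; rewrite !in_setD1 finset.in_setT andbT negbK => /eqP ->; apply: Ha; by left.
  have := Hb H2v (fun y _ => @acyc _ pr o y rt) Hcv => Hb'.
  apply: le_trans (@amen_use _ _ _ _ _ _ _ _ _ _ _ _ HC Ha Hb' fo Lip) _.
  apply: ler_wpM2l; first by case: HC.
  apply: tp; first by rewrite sumr_ge0 // => y _; rewrite powR_ge0.
  rewrite /Q; apply: le_trans _ (@sum_sub_le _ _ (fun y => y \in [set: T] :\ v) (fun y => y != o) (fun y => `|S y * d (pr y) y| `^ p) (fun y => powR_ge0 _ _)).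
  rewrite le_eqVlt; apply/orP; left; apply/eqP; apply: eq_bigl => y; exact: andbC.
have [x xN xL] : exists2 x, x \in N :\ o & x \notin leaves o pr.
  apply/fintype.subsetPn; apply: contra Hleaf => h; rewrite finset.eqEsubset h andbT.
  apply/fintype.subsetP => v vL; apply: contraR sub => vN; apply/existsP; exists v.
  by rewrite vL vN.
have acy : forall y, y != o -> ~~ fconnect pr (pr y) y := fun y => @acyc _ pr o y rt.
move: xN; rewrite in_setD1 => /andP [xo xN].
have [u uo pux] : exists2 u, u != o & pr u = x.
  move: xL; rewrite inE negb_forall => /existsP [u].
  by rewrite negb_imply negbK => /andP [uo /eqP pux]; exists u.
set Vx := subtree pr x.
have inV : forall z, (z \in Vx) = fconnect pr z x := fun z => sub_fconnect _ pr x z.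
have oV : o \notin Vx.
  by rewrite inV; apply/negP => /(@fconnect_root _ pr o x pro) e; move: xo; rewrite e eqxx.
have xV : x \in Vx by rewrite inV connect0.
have Vo : forall z, z \in Vx -> z != o.
  by move=> z zV; apply: contraNneq oV => <-.
have uV : u \in Vx :\ x.
  rewrite in_setD1 inV -pux fconnect1 andbT; apply/negP => /eqP ux.
  by move: (acy u uo); rewrite -ux connect0.
have [w wV wmin] : exists2 w, w \in Vx :\ x &
    forall w', w' \in Vx :\ x -> (#|subtree pr w| <= #|subtree pr w'|)%N.
  case: (@arg_minnP _ u [pred w | w \in Vx :\ x] (fun w => #|subtree pr w|) uV).
  by move=> w wV wmin; exists w.
have wL : w \in leaves o pr.
  rewrite inE; apply/forallP => w'; apply/implyP => w'o; apply/negP => /eqP pw'.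
  move: wV; rewrite in_setD1 inV => /andP [wx wx'].
  have w'V : w' \in Vx :\ x.
    rewrite in_setD1 inV (connect_trans _ wx') ?andbT; last by rewrite -pw' fconnect1.
    apply/negP => /eqP w'x; by move: (acy x xo); rewrite -{1}w'x pw' wx'.
  have pro' : subtree pr w' \proper subtree pr w.
    apply/properP; split.
      apply/fintype.subsetP => z; rewrite !sub_fconnect => h.
      by apply: connect_trans h _; rewrite -pw' fconnect1.
    exists w; first by rewrite sub_fconnect connect0.
    by rewrite sub_fconnect -pw'; exact: acy.
  by move: (wmin w' w'V); rewrite leqNgt (proper_card pro').
have wN : w \in N.
  apply: contraR sub => h; apply/existsP; exists w; by rewrite wL in_setD1 negb_and h orbT.
set M1 := [set: T] :\: (Vx :\ x).
set N1 := N :&: M1.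
set N2 := N :&: Vx.
set a2 := fun z => if z \in Vx :\ x then a z else 0.
set s := \sum_z a2 z.
set a1 := fun z => a z - a2 z + (z == x)%:R * s.
have inM1 : forall z, (z \in M1) = (z \notin Vx :\ x).
  by move=> z; rewrite /M1 !inE andbT.
have a1_out : forall z, z \notin N1 \/ z = o -> a1 z = 0.
  move=> z hz; rewrite /a1 /a2; case: ifPn => zV.
    move: zV; rewrite in_setD1 => /andP [zx _]; by rewrite subrr (negbTE zx) mul0r addr0.
  have zx : z != x.
    apply/negP => /eqP e; case: hz => [|e']; last by move: xo; rewrite -e e' eqxx.
    by rewrite /N1 finset.in_setI inM1 e xN /= in_setD1 eqxx.
  rewrite (negbTE zx) mul0r addr0 subr0; apply: Ha.
  case: hz => [|->]; last by right.
  by rewrite /N1 finset.in_setI inM1 zV andbT; left.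
have a2_out : forall z, z \notin N2 \/ z = x -> a2 z = 0.
  move=> z hz; rewrite /a2; case: ifPn => // zV; apply: Ha; left.
  move: zV; rewrite in_setD1 => /andP [zx zV].
  case: hz => [|e]; last by move: zx; rewrite e eqxx.
  by rewrite /N2 finset.in_setI zV andbT.
have M1prop : M1 \proper [set: T].
  apply/properP; split; first exact: finset.subsetT.
  by exists w; rewrite ?finset.in_setT // inM1 negbK.
have N1card : (#|N1| < #|N|)%N.
  apply: proper_card; apply/properP; split; first exact: finset.subsetIl.
  by exists w => //; rewrite /N1 finset.in_setI inM1 wV andbF.
have N2card : (#|N2| < #|N|)%N.
  apply: proper_card; apply/properP; split; first exact: finset.subsetIl.
  by exists o => //; rewrite /N2 finset.in_setI (negbTE oV) andbF.
have oN1 : o \in N1.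
  by rewrite /N1 finset.in_setI oN inM1 in_setD1 (negbTE oV) andbF.
have xN2 : x \in N2 by rewrite /N2 finset.in_setI xN xV.
have VxT : Vx \proper [set: T].
  apply/properP; split; first exact: finset.subsetT.
  by exists o; rewrite ?finset.in_setT.
case: (boolP (amen p d o N [set: T] <= amen p d o N1 M1)%E) => h1.
  by exists M1, N1, o; split => //; exact: finset.subsetIr.
case: (boolP (amen p d o N [set: T] <= amen p d x N2 Vx)%E) => h2.
  by exists Vx, N2, x; split => //; exact: finset.subsetIr.
rewrite -ltNge in h1; rewrite -ltNge in h2.
have [_ [C1 HC1 <-] C1A] := ereal_inf_lt h1.
have [_ [C2 HC2 <-] C2A] := ereal_inf_lt h2.
exfalso.
set K := Num.max C1 C2.
suff : (amen p d o N [set: T] <= K%:E)%E.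
  by rewrite /K /Num.max; case: ifP => _; rewrite leNgt ?C1A ?C2A.
have C10 : 0 <= C1 by case: HC1.
have C20 : 0 <= C2 by case: HC2.
have K0 : 0 <= K by rewrite (le_trans C10) // le_max lexx.
have sN1 : {subset N1 <= M1} := fintype.subsetP (finset.subsetIr N M1).
have sN2 : {subset N2 <= Vx} := fintype.subsetP (finset.subsetIr N Vx).
have Hb1 := @fp_tree_bound _ p _ d pr M1 o a1 p0 (fun z _ => H1 z).
have H2M1 : forall y, y \in M1 -> y != o -> pr y \in M1.
  move=> y; rewrite !inM1 !in_setD1 !inV => hy yo; apply: contra hy => /andP [pyx pyV].
  rewrite fconnect_eqVf pyV orbT andbT; apply/eqP => yx.
  by move: (acy x xo); rewrite -{1}yx pyV.
have Hb1' := Hb1 H2M1 (fun y _ => acy y) (fun z zM => a1_out z (or_introl (contra (@sN1 z) zM))).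
have Hb2 := @fp_tree_bound _ p _ d pr Vx x a2 p0 (fun z zV => (ltac:(by rewrite -inV))).
have H2V : forall y, y \in Vx -> y != x -> pr y \in Vx.
  by move=> y; rewrite !inV fconnect_eqVf => /orP [->|//].
have Hb2' := Hb2 H2V (fun y yV _ => acy y (Vo y yV)) (fun z zV => a2_out z (or_introl (contra (@sN2 z) zV))).
set Q1 := \sum_(y in M1 | y != o) `|(\sum_(z in subtree pr y) a1 z) * d (pr y) y| `^ p in Hb1'.
set Q2 := \sum_(y in Vx | y != x) `|(\sum_(z in subtree pr y) a2 z) * d (pr y) y| `^ p in Hb2'.
have Q10 : 0 <= Q1 by rewrite sumr_ge0 // => y _; rewrite powR_ge0.
have Q20 : 0 <= Q2 by rewrite sumr_ge0 // => y _; rewrite powR_ge0.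
have QQ : Q1 + Q2 <= Q.
  have eqle : forall u v : R, u = v -> u <= v by move=> ? ? ->.
  rewrite /Q (bigID (fun y => y \in M1)) /=; apply: lerD; apply: eqle.
    apply: eq_big => y; first by rewrite andbC.
    move=> /andP [yM yo]; congr (`| _ * _ | `^ p).
    rewrite /a1 big_split /= sumrB sum_ind_in.
    case: ifPn => xVy.
      suff -> : \sum_(z in subtree pr y) a2 z = s by rewrite subrK.
      rewrite big_mkcond /s; apply: eq_bigr => z _; case: ifPn => // zn.
      rewrite /a2; case: ifPn => // zV; exfalso; move: zn; apply/negP/negPn.
      move: zV; rewrite in_setD1 inV sub_fconnect => /andP [_ zx].
      by apply: connect_trans zx _; rewrite -sub_fconnect.
    rewrite addr0 (_ : \sum_(z in subtree pr y) a2 z = 0) ?subr0 //.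
    apply: big1 => z zVy.
    rewrite /a2; case: ifPn => // zV; exfalso.
    move: zV; rewrite in_setD1 inV => /andP [zx zxc].
    move: zVy; rewrite sub_fconnect => zy.
    case/orP: (@fconnect_comp _ pr z x y zy zxc) => h.
      move: yM; rewrite inM1 in_setD1 inV h andbT negbK => /eqP yx.
      by move: xVy; rewrite -yx sub_fconnect connect0.
    by move: xVy; rewrite sub_fconnect h.
  apply: eq_big => y.
    rewrite inM1 negbK in_setD1.
    by case: (boolP (y \in Vx)) => yV; rewrite ?(Vo y yV) ?andbT ?andbF //= andbC.
  move=> /andP [yV yx]; congr (`| _ * _ | `^ p).
  apply: eq_bigr => z zVy; rewrite /a2 ifT // in_setD1.
  have zV : z \in Vx by rewrite inV; apply: connect_trans _ (_ : fconnect pr y x); rewrite -?sub_fconnect -?inV.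
  rewrite zV andbT; apply/eqP => zx; move: zVy; rewrite zx sub_fconnect => xy.
  move: (yV); rewrite inV fconnect_eqVf (negbTE yx) /= => pyx.
  by move: (acy y (Vo y yV)); rewrite (connect_trans pyx xy).
rewrite HA; apply: ediv_le Tpos _.
apply: ge_ereal_sup => _ [r [Y [f [fo Lip ->]]] <-]; rewrite lee_fin.
set g := fun z => f z - f x.
have gx : g x = 0 by rewrite /g subrr.
have Lip1 : forall y z, y \in N1 -> z \in N1 -> pb_norm (f y - f z) <= d y z.
  by move=> y z; rewrite !finset.in_setI => /andP [yN _] /andP [zN _]; exact: Lip.
have Lip2 : forall y z, y \in N2 -> z \in N2 -> pb_norm (g y - g z) <= d y z.
  move=> y z; rewrite !finset.in_setI => /andP [yN _] /andP [zN _].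
  by rewrite /g opprB addrA subrK; exact: Lip.
have n1 := @amen_use _ _ _ _ _ _ _ _ _ _ _ _ HC1 a1_out Hb1' fo Lip1.
have n2 := @amen_use _ _ _ _ _ _ _ _ _ _ _ _ HC2 a2_out Hb2' gx Lip2.
have ident : \sum_(z in N) a z *: f z =
    \sum_(z in N1) a1 z *: f z + \sum_(z in N2) a2 z *: g z.
  rewrite (@sum_supp _ _ _ N a f (fun z zN => Ha z (or_introl zN))).
  rewrite (@sum_supp _ _ _ N1 a1 f (fun z zN => a1_out z (or_introl zN))).
  rewrite (@sum_supp _ _ _ N2 a2 g (fun z zN => a2_out z (or_introl zN))).
  have e1 : \sum_z a1 z *: f z = \sum_z a z *: f z - \sum_z a2 z *: f z + s *: f x.
    rewrite /a1; under eq_bigr do rewrite scalerDl scalerBl.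
    by rewrite big_split /= sumrB sum_ind.
  have e2 : \sum_z a2 z *: g z = \sum_z a2 z *: f z - s *: f x.
    rewrite /g; under eq_bigr do rewrite scalerBr.
    by rewrite sumrB -scaler_suml.
  by rewrite e1 e2 grp_id.
rewrite ident tQ; apply: pow_back => //; first exact: pb_norm_ge0.
apply: le_trans (pb_norm_ptri _ _) _.
apply: le_trans (_ : K `^ p * Q1 + K `^ p * Q2 <= _); last first.
  by rewrite -mulrDr ler_wpM2l ?powR_ge0.
apply: lerD.
  apply: pow_bound n1 => //; [exact: pb_norm_ge0|by rewrite le_max lexx].
apply: pow_bound n2 => //; [exact: pb_norm_ge0|by rewrite le_max lexx orbT].
Qed.
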